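(* Let $n\ge0$ be an integer. In the polynomial ring $\mathbb C[\alpha_2,\alpha_3]$ with the monomial order described below, the leading term ideal of the ideal $I^0_n:=(\zeta_n,\zeta_{n+1},\overline\zeta_{n+1},\overline\zeta_{n+2})$ contains every monomial $\alpha_2^i\alpha_3^j$ with $2i+3j\ge 2n$.
   Context: The polynomials $\zeta_n,\overline\zeta_n\in\mathbb C[\alpha_2,\alpha_3]$ are defined by $\sum_{n\ge0}\zeta_nt^n=\exp(\alpha_2t+\alpha_3t^2/2)$ and $\sum_{n\ge0}\overline\zeta_nt^n=\exp(\alpha_2t-\alpha_3t^2/2)$; explicitly $\zeta_n=\sum_{0\le j\le n/2}\frac{\alpha_2^{n-2j}\alpha_3^j}{(n-2j)!\,j!\,2^j}$ and $\overline\zeta_n=\sum_{0\le j\le n/2}\frac{(-1)^j\alpha_2^{n-2j}\alpha_3^j}{(n-2j)!\,j!\,2^j}$. The monomial order is graded reverse lexicographic with $\deg\alpha_2=2$, $\deg\alpha_3=4$: $\alpha_2^i\alpha_3^j>\alpha_2^{i'}\alpha_3^{j'}$ if $2i+4j>2i'+4j'$, or if $2i+4j=2i'+4j'$ and the right-most nonzero entry of $(i-i',j-j')$ is negative. The leading term ideal of an ideal is the ideal generated by the leading monomials of its elements. *)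

(* Defs.v *)
From HB Require Import structures.
From mathcomp Require Import all_boot all_order all_algebra.
From mathcomp Require Import reals.
From mathcomp Require Import complex.
From mathcomp Require Import mpoly.

Set Implicit Arguments.
Unset Strict Implicit.
Unset Printing Implicit Defensive.

Import Order.TTheory GRing.Theory Num.Theory.
Local Open Scope ring_scope.

Definition i2 : 'I_2 := @Ordinal 2 0 isT.
Definition i3 : 'I_2 := @Ordinal 2 1 isT.

Definition mono (i j : nat) : 'X_{1..2} := [multinom [tuple i; j]].

Section Defs.
Variable C : fieldType.

Definition alpha2 : {mpoly C[2]} := 'X_i2.
Definition alpha3 : {mpoly C[2]} := 'X_i3.

Definition zeta (n : nat) : {mpoly C[2]} :=
  \sum_(j < (n./2).+1)
     (((n - 2 * j)`! * j`! * 2 ^ j)%:R)^-1 *: (alpha2 ^+ (n - 2 * j) * alpha3 ^+ j).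

Definition zetabar (n : nat) : {mpoly C[2]} :=
  \sum_(j < (n./2).+1)
     ((-1) ^+ j * (((n - 2 * j)`! * j`! * 2 ^ j)%:R)^-1)
        *: (alpha2 ^+ (n - 2 * j) * alpha3 ^+ j).

End Defs.

Definition wdeg (m : 'X_{1..2}) : nat := 2 * m i2 + 4 * m i3.

(* graded reverse lexicographic order: mono_gt m m' iff m > m', i.e.
   wdeg m > wdeg m', or wdeg m = wdeg m' and the right-most nonzero entry
   of m - m' is negative. *)
Definition mono_gt (m m' : 'X_{1..2}) : bool :=
  (wdeg m' < wdeg m)%N ||
  ((wdeg m == wdeg m') &&
   (if m i3 != m' i3 then (m i3 < m' i3)%N else (m i2 < m' i2)%N)).

Section Ideals.
Variable C : fieldType.

Definition in_ideal (k : nat) (g : 'I_k -> {mpoly C[2]}) (p : {mpoly C[2]}) : Prop :=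
  exists c : 'I_k -> {mpoly C[2]}, p = \sum_(l < k) c l * g l.

Definition lead_mono (p : {mpoly C[2]}) (m : 'X_{1..2}) : Prop :=
  m \in msupp p /\ forall m', m' \in msupp p -> m' != m -> mono_gt m m'.

Definition in_lead_term_ideal (I : {mpoly C[2]} -> Prop) (q : {mpoly C[2]}) : Prop :=
  exists (k : nat) (f : 'I_k -> {mpoly C[2]}) (m : 'I_k -> 'X_{1..2})
         (h : 'I_k -> {mpoly C[2]}),
    (forall l, I (f l) /\ f l != 0 /\ lead_mono (f l) (m l)) /\
    q = \sum_(l < k) h l * 'X_[m l].

Definition I0gens (n : nat) : 'I_4 -> {mpoly C[2]} :=
  fun l => match val l with
           | 0 => zeta C n
           | 1 => zeta C n.+1
           | 2 => zetabar C n.+1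
           | _ => zetabar C n.+2
           end.

Definition I0 (n : nat) : {mpoly C[2]} -> Prop := in_ideal (I0gens n).

End Ideals.

(* Main.v *)
Require Import Defs.
From HB Require Import structures.
From mathcomp Require Import all_boot all_order all_algebra.
From mathcomp Require Import reals.
From mathcomp Require Import complex.
From mathcomp Require Import mpoly.
From mathcomp Require Import zify ring.
Set Implicit Arguments.
Unset Strict Implicit.
Unset Printing Implicit Defensive.
Import Order.TTheory GRing.Theory Num.Theory.
Local Open Scope ring_scope.

Lemma mono2 a b : mono a b i2 = a. Proof. by []. Qed.
Lemma mono3 a b : mono a b i3 = b. Proof. by []. Qed.
Lemma monoE (m : 'X_{1..2}) : m = mono (m i2) (m i3).
Proof.
apply/mnmP => k; case: k => [[|[|k]] Hk].
- by rewrite (_ : Ordinal Hk = i2) ?mono2 //; apply/val_inj.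
- by rewrite (_ : Ordinal Hk = i3) ?mono3 //; apply/val_inj.
- by [].
Qed.
Lemma mono_eq a b c d : (mono a b == mono c d) = (a == c) && (b == d).
Proof.
apply/eqP/andP => [E|[/eqP-> /eqP->]] //.
by rewrite -(mono2 a b) -(mono3 a b) E mono2 mono3.
Qed.
Lemma monoD a b c d : (mono a b + mono c d)%MM = mono (a + c) (b + d).
Proof. by rewrite [LHS]monoE !mnmDE !mono2 !mono3. Qed.
Lemma mono_le a b c d : (mono c d <= mono a b)%MM = (c <= a)%N && (d <= b)%N.
Proof.
apply/mnm_lepP/andP => [H|[H1 H2]].
  by split; [move: (H i2) | move: (H i3)]; rewrite !(mono2, mono3).
move=> k; case: k => [[|[|k]] Hk] //.
Qed.
Lemma monoB a b c d : (mono a b - mono c d)%MM = mono (a - c) (b - d).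
Proof. by rewrite [LHS]monoE !mnmBE !mono2 !mono3. Qed.

Section Coef.
Variable C : numFieldType.
Implicit Types p q : {mpoly C[2]}.

Lemma coefMX p (m k : 'X_{1..2}) :
  (p * 'X_[m])@_k = if (m <= k)%MM then p@_(k - m)%MM else 0.
Proof.
case: ifP => H.
  by rewrite -{1}(submK H) addmC mcoeffMX.
apply/eqP; rewrite mcoeff_eq0; apply/negP.
rewrite (perm_mem (msuppMX p m)) => /mapP [m' _ E].
by rewrite E lem_addr in H.
Qed.

Lemma alpha2E : alpha2 C = 'X_[mono 1 0].
Proof.
rewrite /alpha2; congr ('X_[_]); apply/mnmP => k; rewrite mnm1E.
by case: k => [[|[|k]] Hk].
Qed.
Lemma alpha3E : alpha3 C = 'X_[mono 0 1].
Proof.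
rewrite /alpha3; congr ('X_[_]); apply/mnmP => k; rewrite mnm1E.
by case: k => [[|[|k]] Hk].
Qed.
Lemma monoMn a b k : (mono a b *+ k)%MM = mono (a * k) (b * k).
Proof. by rewrite [LHS]monoE !mulmnE !mono2 !mono3. Qed.
Lemma alphaXE a b : alpha2 C ^+ a * alpha3 C ^+ b = 'X_[mono a b].
Proof.
by rewrite alpha2E alpha3E !mpolyXn -mpolyXD !monoMn monoD !mul0n !mul1n addn0.
Qed.

Definition cf p a b := p@_(mono a b).

Lemma cf_eq p q : (forall a b, cf p a b = cf q a b) -> p = q.
Proof. by move=> H; apply/mpolyP => m; rewrite [m]monoE; apply: H. Qed.

Lemma cfMx p a b : cf (p * alpha2 C) a b = if (0 < a)%N then cf p a.-1 b else 0.
Proof.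
rewrite /cf alpha2E coefMX mono_le monoB; case: a => [|a] //=.
by rewrite subn0 subn1.
Qed.

Lemma cfMy p k a b : cf (p * alpha3 C ^+ k) a b = if (k <= b)%N then cf p a (b - k) else 0.
Proof.
rewrite /cf alpha3E mpolyXn coefMX monoMn mono_le monoB !mul0n mul1n leq0n subn0 /=.
by [].
Qed.

Lemma cf_gen (f : nat -> nat -> C) m a b :
  cf (\sum_(j < (m./2).+1) f (m - 2 * j)%N j *: (alpha2 C ^+ (m - 2 * j) * alpha3 C ^+ j)) a b
  = if (a + 2 * b == m)%N then f a b else 0.
Proof.
rewrite /cf raddf_sum /=.
under eq_bigr => j _ do rewrite mcoeffZ alphaXE mcoeffX mono_eq.
case: (boolP (a + 2 * b == m)%N) => /eqP H.
  have Hb : (b < (m./2).+1)%N by lia.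
  rewrite (bigD1 (Ordinal Hb)) //= big1 ?addr0.
    by rewrite (_ : m - 2 * b = a)%N ?eqxx ?mulr1 //; lia.
  move=> j Hj; rewrite (_ : (nat_of_ord j == b) = false) ?andbF ?mulr0 //.
  by apply/negbTE; move: Hj; apply: contra => /eqP E; apply/eqP/val_inj.
rewrite big1 // => j _.
case: (boolP ((m - 2 * j == a)%N && (nat_of_ord j == b))) => [/andP[/eqP E1 /eqP E2]|_].
  have := ltn_ord j; lia.
by rewrite mulr0.
Qed.

Definition kap (a b : nat) : C := ((a`! * b`! * 2 ^ b)%:R)^-1.

Lemma cf_zeta m a b : cf (zeta C m) a b = if (a + 2 * b == m)%N then kap a b else 0.
Proof. exact: (cf_gen kap m a b). Qed.

Lemma cf_zetabar m a b :
  cf (zetabar C m) a b = if (a + 2 * b == m)%N then (-1) ^+ b * kap a b else 0.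
Proof. exact: (cf_gen (fun a b => (-1) ^+ b * kap a b) m a b). Qed.


Lemma natr_neq0 k : (k.+1%:R : C) != 0.
Proof. by rewrite pnatr_eq0. Qed.

Lemma kapS1 a b : (a.+1)%:R * kap a.+1 b = kap a b.
Proof.
rewrite /kap factS -!mulnA natrM invfM mulrA divff ?mul1r ?mulnA //.
exact: natr_neq0.
Qed.

Lemma kapS2 a b : (2 * b.+1)%:R * kap a b.+1 = kap a b.
Proof.
rewrite /kap factS expnS.
rewrite (_ : (a`! * (b.+1 * b`!) * (2 * 2 ^ b) = (2 * b.+1) * (a`! * b`! * 2 ^ b))%N); last by ring.
rewrite (natrM C (2 * b.+1) (a`! * b`! * 2 ^ b)) invfM mulrA divff ?mul1r //.
by rewrite pnatr_eq0 muln_eq0.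
Qed.

Lemma rec_gen (s : C) (z : nat -> {mpoly C[2]})
  (Hz : forall m a b, cf (z m) a b = if (a + 2 * b == m)%N then s ^+ b * kap a b else 0) m :
  (m.+2)%:R *: z m.+2 = z m.+1 * alpha2 C + s *: (z m * alpha3 C ^+ 1).
Proof.
apply: cf_eq => a b.
rewrite /cf mcoeffZ mcoeffD mcoeffZ -!/(cf _ _ _) cfMx cfMy !Hz.
case: a => [|a]; case: b => [|b] /=.
- by rewrite mulr0 mulr0 addr0.
- rewrite subn1 /= add0r.
  case: (boolP (0 + 2 * b.+1 == m.+2)%N) => /eqP H.
    rewrite (_ : (0 + 2 * b == m)%N) ?eqxx; last by apply/eqP; lia.
    rewrite -(kapS2 0 b) exprS !mulrA (_ : m.+2 = 2 * b.+1)%N; last by lia.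
    ring.
  rewrite (_ : (0 + 2 * b == m)%N = false) ?mulr0 //; apply/negbTE/eqP; lia.
- rewrite mulr0 addr0 muln0 !addn0 expr0 !mul1r.
  case: (boolP (a.+1 == m.+2)%N) => /eqP H.
    rewrite (_ : (a == m.+1)%N) ?eqxx; last by apply/eqP; lia.
    by rewrite -(kapS1 a 0) H.
  rewrite (_ : (a == m.+1)%N = false) ?mulr0 //; apply/negbTE/eqP; lia.
- rewrite subn1 /=.
  case: (boolP (a.+1 + 2 * b.+1 == m.+2)%N) => /eqP H.
    rewrite (_ : (a + 2 * b.+1 == m.+1)%N) ?eqxx; last by apply/eqP; lia.
    rewrite (_ : (a.+1 + 2 * b == m)%N) ?eqxx; last by apply/eqP; lia.
    rewrite -(kapS1 a b.+1) -(kapS2 a.+1 b) -H exprS natrD.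
    ring.
  rewrite (_ : (a + 2 * b.+1 == m.+1)%N = false); last by apply/negbTE/eqP; lia.
  rewrite (_ : (a.+1 + 2 * b == m)%N = false); last by apply/negbTE/eqP; lia.
  by rewrite !mulr0 addr0.
Qed.


Section Ideal.
Variables (k : nat) (g : 'I_k -> {mpoly C[2]}).
Local Notation J := (in_ideal g).

Lemma ideal0 : J 0.
Proof. by exists (fun _ => 0); rewrite big1 // => l _; rewrite mul0r. Qed.
Lemma idealD p q : J p -> J q -> J (p + q).
Proof.
move=> [c1 ->] [c2 ->]; exists (fun l => c1 l + c2 l).
by rewrite -big_split /=; apply: eq_bigr => l _; rewrite mulrDl.
Qed.
Lemma idealMl q p : J p -> J (q * p).
Proof.
move=> [c ->]; exists (fun l => q * c l).
by rewrite mulr_sumr; apply: eq_bigr => l _; rewrite mulrA.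
Qed.
Lemma idealMr q p : J p -> J (p * q).
Proof. by move=> H; rewrite mulrC; apply: idealMl. Qed.
Lemma idealZ (a : C) p : J p -> J (a *: p).
Proof. by move=> H; rewrite -mul_mpolyC; apply: idealMl. Qed.
Lemma idealN p : J p -> J (- p).
Proof. by move=> H; rewrite -scaleN1r; apply: idealZ. Qed.
Lemma idealB p q : J p -> J q -> J (p - q).
Proof. by move=> H1 H2; apply: idealD => //; apply: idealN. Qed.
Lemma ideal_gen l : J (g l).
Proof.
exists (fun l' => (l' == l)%:R); rewrite (bigD1 l) //= eqxx mul1r big1 ?addr0 //.
by move=> l' /negbTE ->; rewrite mul0r.
Qed.

Lemma ladder (s : C) (hs : s * s = 1) (z : nat -> {mpoly C[2]})
  (Hrec : forall m, (m.+2)%:R *: z m.+2 = z m.+1 * alpha2 C + s *: (z m * alpha3 C ^+ 1))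
  N (H0 : J (z N)) (H1 : J (z N.+1)) :
  forall (e m : nat), (N <= m + e)%N -> J (z m * alpha3 C ^+ e).
Proof.
have Eup m : z m.+2 = (m.+2%:R)^-1 *: (z m.+1 * alpha2 C + s *: (z m * alpha3 C ^+ 1)).
  by rewrite -Hrec scalerA mulVf ?scale1r // natr_neq0.
have up d : J (z (N + d)%N) /\ J (z (N + d)%N.+1).
  elim: d => [|d [IH1 IH2]]; first by rewrite addn0; split.
  rewrite addnS; split => //; rewrite Eup; apply: idealZ; apply: idealD.
    exact: idealMr.
  by apply: idealZ; apply: idealMr.
have upm m : (N <= m)%N -> J (z m).
  by move=> Hm; rewrite -(subnKC Hm); case: (up (m - N)%N).
elim=> [|p IH] m Hm.
  by rewrite expr0 mulr1; apply: upm; rewrite addn0 in Hm.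
case: (leqP N m) => HNm; first by apply: idealMr; apply: upm.
have E : z m * alpha3 C ^+ 1 = s *: ((m.+2)%:R *: z m.+2 - z m.+1 * alpha2 C).
  by rewrite Hrec addrC addKr scalerA hs scale1r.
rewrite exprS mulrA -(expr1 (alpha3 C)) E -scalerAl; apply: idealZ.
rewrite mulrBl -scalerAl; apply: idealB.
  by apply: idealZ; apply: IH; lia.
rewrite mulrAC; apply: idealMr; apply: IH; lia.
Qed.

End Ideal.

Lemma rec_zeta m : (m.+2)%:R *: zeta C m.+2 = zeta C m.+1 * alpha2 C + 1 *: (zeta C m * alpha3 C ^+ 1).
Proof. by apply: rec_gen => m' a b; rewrite cf_zeta expr1n mul1r. Qed.
Lemma rec_zetabar m : (m.+2)%:R *: zetabar C m.+2 = zetabar C m.+1 * alpha2 C + (-1) *: (zetabar C m * alpha3 C ^+ 1).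
Proof. by apply: rec_gen => m' a b; rewrite cf_zetabar. Qed.

Lemma memZ n e m : (n <= m + e)%N -> I0 (C := C) n (zeta C m * alpha3 C ^+ e).
Proof.
apply: (ladder (s := 1)) => //; first by rewrite mulr1.
- exact: rec_zeta.
- exact: (ideal_gen (I0gens C n) (@Ordinal 4 0 isT)).
- exact: (ideal_gen (I0gens C n) (@Ordinal 4 1 isT)).
Qed.
Lemma memZb n e m : (n.+1 <= m + e)%N -> I0 (C := C) n (zetabar C m * alpha3 C ^+ e).
Proof.
apply: (ladder (s := -1)) => //; first by rewrite mulrNN mulr1.
- exact: rec_zetabar.
- exact: (ideal_gen (I0gens C n) (@Ordinal 4 2 isT)).
- exact: (ideal_gen (I0gens C n) (@Ordinal 4 3 isT)).
Qed.

Definition ff (p b : nat) : C := \prod_(k < p) (b%:R - k%:R).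

Lemma ff0 (p b : nat) : (b < p)%N -> ff p b = 0.
Proof. by move=> H; rewrite /ff (bigD1 (Ordinal H)) //= subrr mul0r. Qed.

Lemma kap_shift (a p b : nat) : (p <= b)%N -> kap a (b - p) = 2 ^+ p * ff p b * kap a b.
Proof.
elim: p => [|p IH] H; first by rewrite subn0 /ff big_ord0 expr0 !mul1r.
have Hb : (b - p = (b - p.+1).+1)%N by lia.
rewrite -(kapS2 a (b - p.+1)) -Hb IH 1?ltnW // /ff big_ord_recr /= exprS.
rewrite -natrB 1?ltnW // natrM; ring.
Qed.

Section Good.
Variables (n D : nat).

Definition Good (phi : nat -> C) := exists F : {mpoly C[2]}, I0 (C := C) n F /\
  forall a b, cf F a b = if (a + 2 * b == D)%N then phi b * kap a b else 0.

Lemma Good_ext phi psi : phi =1 psi -> Good phi -> Good psi.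
Proof.
move=> E [F [HF HC]]; exists F; split => // a b.
by rewrite HC E.
Qed.

Lemma Good0 : Good (fun _ => 0).
Proof.
exists 0; split; first exact: ideal0.
by move=> a b; rewrite /cf mcoeff0 mul0r if_same.
Qed.

Lemma Good_add phi psi : Good phi -> Good psi -> Good (fun b => phi b + psi b).
Proof.
move=> [F [HF HC]] [G [HG HD]]; exists (F + G); split; first exact: idealD.
move=> a b; rewrite /cf mcoeffD -!/(cf _ _ _) HC HD.
by case: ifP; rewrite ?addr0 // mulrDl.
Qed.

Lemma Good_scale (c : C) phi : Good phi -> Good (fun b => c * phi b).
Proof.
move=> [F [HF HC]]; exists (c *: F); split; first exact: idealZ.
move=> a b; rewrite /cf mcoeffZ -!/(cf _ _ _) HC.
by case: ifP; rewrite ?mulr0 // mulrA.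
Qed.

Lemma Good_ff (p : nat) : (2 * p <= D)%N -> (n <= D - p)%N -> Good (fun b => ff p b).
Proof.
move=> H1 H2.
exists ((2 ^+ p)^-1 *: (zeta C (D - 2 * p) * alpha3 C ^+ p)); split.
  by apply: idealZ; apply: memZ; lia.
move=> a b; rewrite /cf mcoeffZ -!/(cf _ _ _) cfMy cf_zeta.
case: (leqP p b) => Hpb.
  rewrite (_ : (a + 2 * (b - p) == D - 2 * p)%N = (a + 2 * b == D)%N); last first.
    by apply/eqP/eqP => H'; lia.
  case: ifP; rewrite ?mulr0 // => _.
  rewrite kap_shift // !mulrA mulVf ?mul1r // expf_neq0 // pnatr_eq0 //.
by rewrite ff0 // mul0r mulr0 if_same.
Qed.

Lemma Good_ffb (p : nat) : (2 * p <= D)%N -> (n.+1 <= D - p)%N -> Good (fun b => (-1) ^+ b * ff p b).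
Proof.
move=> H1 H2.
exists (((-1) ^+ p * 2 ^+ p)^-1 *: (zetabar C (D - 2 * p) * alpha3 C ^+ p)); split.
  by apply: idealZ; apply: memZb; lia.
move=> a b; rewrite /cf mcoeffZ -!/(cf _ _ _) cfMy cf_zetabar.
case: (leqP p b) => Hpb.
  rewrite (_ : (a + 2 * (b - p) == D - 2 * p)%N = (a + 2 * b == D)%N); last first.
    by apply/eqP/eqP => H'; lia.
  case: ifP; rewrite ?mulr0 // => _.
  have Es : (-1) ^+ b = (-1) ^+ (b - p) * (-1) ^+ p :> C by rewrite -exprD subnK.
  rewrite kap_shift // Es.
  have Hnz : (-1) ^+ p * 2 ^+ p != 0 :> C.
    by rewrite mulf_neq0 // ?signr_eq0 // expf_neq0 // pnatr_eq0.
  rewrite invfM -exprVn invrN1.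
  have t0 : (2 : C) ^+ p != 0 by rewrite expf_neq0 // pnatr_eq0.
  by field.
by rewrite ff0 // !(mulr0, mul0r) if_same.
Qed.

Definition ffP (k : nat) : {poly C} := \prod_(i < k) ('X - (i%:R)%:P).

Lemma ffP_eval k b : (ffP k).[b%:R] = ff k b.
Proof. by rewrite /ffP horner_prod; apply: eq_bigr => i _; rewrite hornerXsubC. Qed.

Lemma size_ffP k : size (ffP k) = k.+1.
Proof. by rewrite /ffP size_prod_XsubC -[index_enum _]enumT size_enum_ord. Qed.

Lemma coef_ffP k : (ffP k)`_k = 1.
Proof.
have := lead_coef_prod_XsubC (index_enum 'I_k) xpredT (fun i : 'I_k => (i%:R : C)).
by rewrite lead_coefE -/(ffP k) size_ffP.
Qed.

Lemma size_sub_top (P Q : {poly C}) k :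
  (size P <= k.+1)%N -> (size Q <= k.+1)%N -> P`_k = Q`_k -> (size (P - Q)%R <= k)%N.
Proof.
move=> HP HQ E; apply/leq_sizeP => j Hj; rewrite coefB.
case: (eqVneq j k) => [->|Hjk]; first by rewrite E subrr.
have Hkj : (k.+1 <= j)%N by rewrite ltn_neqAle eq_sym Hjk Hj.
by rewrite (nth_default _ (leq_trans HP Hkj)) (nth_default _ (leq_trans HQ Hkj)) subrr.
Qed.

Lemma Good_poly (w : nat -> C) K :
  (forall p : nat, (p < K)%N -> Good (fun b => w b * ff p b)) ->
  forall P : {poly C}, (size P <= K)%N -> Good (fun b => w b * P.[b%:R]).
Proof.
elim: K => [|K IH] H P HP.
  move/size_poly_leq0P: HP => ->.
  by apply: Good_ext Good0 => b; rewrite horner0 mulr0.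
have HQ : (size (P - P`_K *: ffP K)%R <= K)%N.
  apply: size_sub_top => //.
    by apply: leq_trans (size_scale_leq _ _) _; rewrite size_ffP.
  by rewrite coefZ coef_ffP mulr1.
have G1 := IH (fun (r : nat) Hr => H r (ltnW Hr)) _ HQ.
have G2 := Good_scale (P`_K) (H K (ltnSn K)).
apply: Good_ext (Good_add G1 G2) => b /=.
rewrite hornerD hornerN hornerZ ffP_eval; ring.
Qed.

Lemma kap_neq0 a b : kap a b != 0.
Proof. by rewrite /kap invr_eq0 pnatr_eq0 -lt0n !muln_gt0 !fact_gt0 expn_gt0. Qed.

Lemma Good_lead (j : nat) phi : Good phi -> (2 * j <= D)%N -> phi j != 0 ->
  (forall b, (b < j)%N -> phi b = 0) ->
  exists F, I0 (C := C) n F /\ F != 0 /\ lead_mono F (mono (D - 2 * j) j).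
Proof.
move=> [F [HF HC]] Hj Hphi Hlow.
have Hm : F@_(mono (D - 2 * j) j) != 0.
  rewrite -/(cf _ _ _) HC (_ : (D - 2 * j + 2 * j == D)%N); last by apply/eqP; lia.
  by rewrite mulf_neq0 // kap_neq0.
exists F; split => //; split.
  by apply: contraNneq Hm => ->; rewrite mcoeff0.
split; first by rewrite mcoeff_msupp.
move=> m'; rewrite mcoeff_msupp [m']monoE -/(cf _ _ _) HC.
set a := m' i2; set b := m' i3.
case: ifP => [/eqP Hab|]; last by rewrite eqxx.
move=> Hnz Hne.
have Hjb : (j <= b)%N.
  rewrite leqNgt; apply/negP => Hbj; move: Hnz; rewrite Hlow // mul0r eqxx //.
have Hjb' : j != b.
  apply: contraNneq Hne => Ejb; rewrite mono_eq; apply/andP; split; apply/eqP; lia.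
rewrite /mono_gt /wdeg !mono2 !mono3; apply/orP; right; apply/andP; split.
  by apply/eqP; lia.
by rewrite Hjb'; lia.
Qed.

End Good.

Definition pX (f : nat -> C) (k : nat) : {poly C} := \prod_(i < k) ('X - (f i)%:P).

Lemma pX_eval f k x : (pX f k).[x] = \prod_(i < k) (x - f i).
Proof. by rewrite /pX horner_prod; apply: eq_bigr => i _; rewrite hornerXsubC. Qed.

Lemma size_pX f k : size (pX f k) = k.+1.
Proof. by rewrite /pX size_prod_XsubC -[index_enum _]enumT size_enum_ord. Qed.

Lemma coef_pX f k : (pX f k)`_k = 1.
Proof.
have := lead_coef_prod_XsubC (index_enum 'I_k) xpredT (fun i : 'I_k => f i).
by rewrite lead_coefE -/(pX f k) size_pX.
Qed.

End Coef.


Lemma main_gen (C : numFieldType) (n i j : nat) :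
  (2 * n <= 2 * i + 3 * j)%N ->
  in_lead_term_ideal (I0 (C := C) n) 'X_[mono i j].
Proof.
move=> H.
set D := (i + 2 * j)%N.
set e := (j.+1 %/ 2)%N.
pose beta (k : nat) : C := if (2 * k + 1 < j)%N then (2 * k + 1)%:R else 0.
pose A := pX (fun k : nat => ((2 * k)%:R : C)) e.
pose B := pX beta e.
pose U := (2 : C)^-1 *: (A + B).
pose W := (2 : C)^-1 *: (A - B).
have h2 : (2 : C) != 0 by rewrite pnatr_eq0.
have GU : Good n D (fun b => 1 * U.[b%:R]).
  apply: (@Good_poly C n D (fun _ => 1) e.+1).
    move=> p Hp; apply: Good_ext (@Good_ff C n D p _ _).
    - by move=> b; rewrite mul1r.
    - rewrite /D /e in Hp *; lia.
    - rewrite /D /e in Hp *; lia.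
  apply: leq_trans (size_scale_leq _ _) _.
  by apply: leq_trans (size_add _ _) _; rewrite !size_pX maxnn.
have GW : Good n D (fun b => (-1) ^+ b * W.[b%:R]).
  apply: (@Good_poly C n D (fun b => (-1) ^+ b) e).
    move=> p Hp; apply: (@Good_ffb C n D p).
    - rewrite /D /e in Hp *; lia.
    - rewrite /D /e in Hp *; lia.
  apply: leq_trans (size_scale_leq _ _) _.
  by apply: size_sub_top; rewrite ?size_pX ?coef_pX.
have G := Good_add GU GW.
have Hphi b : 1 * U.[b%:R] + (-1) ^+ b * W.[b%:R] = if odd b then B.[b%:R] else A.[b%:R].
  rewrite /U /W !hornerZ hornerD hornerD hornerN -signr_odd.
  by case: (odd b) => /=; field.
have HjD : (2 * j <= D)%N by rewrite /D; lia.
have Hnz : (1 * U.[j%:R] + (-1) ^+ j * W.[j%:R]) != 0.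
  rewrite Hphi; have := odd_double_half j; case: (odd j) => /= Ej.
    rewrite pX_eval; apply/prodf_neq0 => k _; rewrite /beta.
    case: ifP => Hk.
      by rewrite -natrB ?pnatr_eq0 ?subn_eq0 -?ltnNge //; lia.
    by rewrite subr0 pnatr_eq0; lia.
  rewrite pX_eval; apply/prodf_neq0 => k _.
  have Hk : (2 * k < j)%N by have := ltn_ord k; rewrite /e; lia.
  by rewrite -natrB ?pnatr_eq0 ?subn_eq0 -?ltnNge //; lia.
have Hlow : forall b, (b < j)%N -> 1 * U.[b%:R] + (-1) ^+ b * W.[b%:R] = 0.
  move=> b Hb; rewrite Hphi; have := odd_double_half b; case: (odd b) => /= Eb.
    have Hk : (b./2 < e)%N by rewrite /e; lia.
    rewrite pX_eval; apply/eqP/prodf_eq0; exists (Ordinal Hk) => //=.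
    rewrite /beta ifT; last by lia.
    by rewrite (_ : (2 * b./2 + 1)%N = b) ?subrr //; lia.
  have Hk : (b./2 < e)%N by rewrite /e; lia.
  rewrite pX_eval; apply/eqP/prodf_eq0; exists (Ordinal Hk) => //=.
  by rewrite (_ : (2 * b./2)%N = b) ?subrr //; lia.
have [F [HF [F0 HL]]] := @Good_lead C n D j _ G HjD Hnz Hlow.
exists 1%N, (fun _ => F), (fun _ => mono i j), (fun _ => 1); split.
  by move=> l; split => //; split => //; rewrite (_ : i = D - 2 * j)%N //; lia.
by rewrite big_ord1 mul1r.
Qed.

Theorem proposition4p1 (R : realType) (n i j : nat) :
  (2 * n <= 2 * i + 3 * j)%N ->
  in_lead_term_ideal (I0 (C := R[i]) n) 'X_[mono i j].
Proof. exact: main_gen. Qed.
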